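(* Let $f_{n,i}$ denote the number of $i$-dimensional faces of the Whitehouse complex $\Delta_n$ ($n\ge 3$), with the convention $f_{m,j}=0$ for $j<-1$ or $j>m-4$. Then $f_{n,-1}=1$ for all $n\ge 3$, and for all $n\ge 4$ and $-1\le i\le n-4$, $$f_{n,i}=(i+2)\,f_{n-1,i}+(n+i-1)\,f_{n-1,i-1}.$$
   Context: The Whitehouse complex $\Delta_n$ ($n\ge 3$) is the simplicial complex with vertex set $V_n=\{S\subseteq\{2,\dots,n\}: 2\le |S|\le n-2\}$, in which a subset $F\subseteq V_n$ is a face iff for all $S,T\in F$ one has $S\subseteq T$, $T\subseteq S$, or $S\cap T=\emptyset$. (So $\Delta_3=\{\emptyset\}$.) A face $F$ has dimension $|F|-1$. *)

(* Defs.v *)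
From mathcomp Require Import all_boot all_order all_algebra.
Set Implicit Arguments. Unset Strict Implicit. Unset Printing Implicit Defensive.
Import Order.TTheory GRing.Theory Num.Theory.

(* Ground set {2,...,n} is represented inside 'I_n.+1 as the elements of value >= 2. *)

Definition wh_vertex (n : nat) (S : {set 'I_n.+1}) : bool :=
  [&& [forall x in S, 2 <= nat_of_ord x], 2 <= #|S| & #|S| <= n - 2].

Definition wh_face (n : nat) (F : {set {set 'I_n.+1}}) : bool :=
  [forall S in F, wh_vertex S] &&
  [forall S in F, forall T in F,
     [|| S \subset T, T \subset S | [disjoint S & T]]].

(* f n i = number of i-dimensional faces of Delta_n (i.e. faces with i+1 elements).
   Automatically 0 for i < -1. *)
Definition whf (n : nat) (i : int) : nat :=
  #|[set F : {set {set 'I_n.+1}} | wh_face F && ((#|F|%:Z)%R == (i + 1)%R)]|.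

(* Main.v *)
Require Import Defs.
From mathcomp Require Import all_boot all_order all_algebra.
From mathcomp Require Import zify.
Set Implicit Arguments. Unset Strict Implicit. Unset Printing Implicit Defensive.


Definition vert (T : finType) (U S : {set T}) :=
  [&& S \subset U, 2 <= #|S| & #|S| <= #|U| - 1].
Definition lr (T : finType) (S R : {set T}) :=
  [|| S \subset R, R \subset S | [disjoint S & R]].
Definition face (T : finType) (U : {set T}) (F : {set {set T}}) :=
  [forall S in F, vert U S] && [forall S in F, forall R in F, lr S R].

Lemma lrC (T : finType) (S R : {set T}) : lr S R = lr R S.
Proof. by rewrite /lr orbA (orbC (S \subset R)) -orbA disjoint_sym. Qed.

Lemma faceP (T : finType) (U : {set T}) (F : {set {set T}}) :
  reflect ((forall S, S \in F -> vert U S) /\ (forall S R, S \in F -> R \in F -> lr S R))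
    (face U F).
Proof.
apply: (iffP andP) => [[/forall_inP H1 H2]|[H1 H2]]; split => //.
- by move=> S R SF RF; move/forall_inP: H2 => /(_ S SF)/forall_inP; apply.
- by apply/forall_inP.
- by apply/forall_inP => S SF; apply/forall_inP => R RF; apply: H2.
Qed.

Definition build (T : finType) (a : T) (G : {set {set T}}) (A : {set T}) (c : bool) :=
  [set S in G | ~~ (A \subset S)] :|: [set a |: S | S in [set S in G | A \subset S]]
  :|: (if c then [set A] else if #|A| == 1 then [set a |: A] else set0).

Lemma buildP (T : finType) (a : T) (G : {set {set T}}) (A : {set T}) (c : bool) (X : {set T}) :
  reflect [\/ X \in G /\ ~~ (A \subset X),
              exists2 S, S \in G /\ A \subset S & X = a |: S,
              c /\ X = A | [/\ ~~ c, #|A| = 1 & X = a |: A]]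
    (X \in build a G A c).
Proof.
rewrite /build !inE; apply: (iffP idP).
- case/orP => [/orP[/andP[]|/imsetP[S]]|]; first by constructor 1.
  + by rewrite inE => /andP[] *; constructor 2; exists S.
  + case: c; first by rewrite inE => /eqP; constructor 3.
    by case: eqP => // ?; rewrite inE => /eqP; constructor 4.
- case=> [[-> ->]//|[S [SG AS] ->]|[-> ->]|[/negbTE -> /eqP -> ->]].
  + by apply/orP; left; apply/orP; right; apply/imsetP; exists S; rewrite // inE SG.
  + by rewrite inE eqxx orbT.
  + by rewrite inE eqxx orbT.
Qed.


Lemma disjP (T : finType) (A B : {set T}) :
  reflect (forall x, x \in A -> x \in B -> False) [disjoint A & B].
Proof.
rewrite -setI_eq0; apply: (iffP eqP) => [H x xA xB|H].
- have: x \in A :&: B by rewrite inE xA xB.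
  by rewrite H inE.
- by apply/eqP; apply/negPn/negP => /set0Pn [x]; rewrite inE => /andP[]; apply: H.
Qed.

Definition validA (T : finType) (U : {set T}) (a : T) (G : {set {set T}}) (A : {set T}) (c : bool) :=
  [|| A \in G, A == U :\ a | [&& #|A| == 1, A \subset U :\ a & ~~ c]].

Lemma cardY (T : finType) (U : {set T}) (a : T) : a \in U -> #|U :\ a| = #|U| - 1.
Proof. by move=> aU; rewrite (cardsD1 a U) aU; lia. Qed.

Lemma validA_facts (T : finType) (U : {set T}) (a : T) (G : {set {set T}}) (A : {set T}) (c : bool) :
  a \in U -> 2 < #|U| -> face (U :\ a) G -> validA U a G A c ->
  [/\ A \subset U :\ a, a \notin A & 0 < #|A|].
Proof.
move=> aU U3 /faceP[fv _] /or3P[/fv/and3P[AY A2 _]|/eqP->|/and3P[/eqP A1 AY _]].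
- by split=> //; [ move/subsetD1P: AY => [] | lia].
- by split=> //; [rewrite !inE eqxx | rewrite cardY //; lia].
- by split=> //; [ move/subsetD1P: AY => [] | lia].
Qed.

Lemma G_facts (T : finType) (U : {set T}) (a : T) (G : {set {set T}}) S :
  a \in U -> face (U :\ a) G -> S \in G ->
  [/\ S \subset U :\ a, S \subset U, a \notin S & 2 <= #|S| <= #|U| - 2].
Proof.
move=> aU /faceP[fv _] /fv /and3P[SY S2 S3].
have [SU aS] := subsetD1P SY.
by split=> //; rewrite S2 /=; rewrite cardY in S3; lia.
Qed.

Lemma subU1 (T : finType) (U S : {set T}) (a : T) : a \in U -> S \subset U -> a |: S \subset U.
Proof. by move=> aU SU; apply/subsetP => x; rewrite in_setU1 => /orP[/eqP->|/(subsetP SU)]. Qed.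

Lemma build_face (T : finType) (U : {set T}) (a : T) (G : {set {set T}}) (A : {set T}) (c : bool) :
  a \in U -> 2 < #|U| -> face (U :\ a) G -> validA U a G A c -> face U (build a G A c).
Proof.
move=> aU U3 fG vA.
have [AY aA A0] := validA_facts aU U3 fG vA.
have [AU _] := subsetD1P AY.
have Gf := G_facts aU fG.
have [_ fl] : _ /\ _ := elimTF (faceP _ _) fG.
have cA : c -> A \in G \/ A = U :\ a.
  by move=> cc; case/or3P: vA => [->|/eqP->|/and3P[_ _]]; [left|right|rewrite cc].
have YU : U :\ a \subset U by apply: subD1set.
apply/faceP; split.
- move=> X /buildP[[XG _]|[S [SG _] ->]|[cc ->]|[_ A1 ->]].
  + by have [_ XU _ /andP[X1 X2]] := Gf _ XG; rewrite /vert XU X1 /=; lia.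
  + have [_ SU aS /andP[S1 S2]] := Gf _ SG.
    by rewrite /vert subU1 // cardsU1 aS /=; lia.
  + case: (cA cc) => [AG|->].
    * by have [_ XU _ /andP[X1 X2]] := Gf _ AG; rewrite /vert XU X1 /=; lia.
    * by rewrite /vert YU cardY //=; lia.
  + by rewrite /vert subU1 // cardsU1 aA A1 /=; lia.
-
  have l12 : forall X S, X \in G -> ~~ (A \subset X) -> S \in G -> A \subset S -> lr X (a |: S).
    move=> X S XG nAX SG AS; have [_ _ aX _] := Gf _ XG.
    case/or3P: (fl _ _ XG SG) => [XS|SX|dXS].
    * by rewrite /lr (subset_trans XS (subsetU1 _ _)).
    * by rewrite (subset_trans AS SX) in nAX.
    * rewrite /lr; apply/orP; right; apply/orP; right; apply/disjP => x xX.
      rewrite in_setU1 => /orP[/eqP xa|xS]; first by rewrite -xa xX in aX.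
      by move/disjP: dXS => /(_ x xX xS).
  have l13 : forall X, X \in G -> c -> lr X A.
    move=> X XG cc; case: (cA cc) => [AG|AE]; first by apply: fl.
    by have [XY _ _ _] := Gf _ XG; rewrite /lr AE XY.
  have l14 : forall X, X \in G -> ~~ (A \subset X) -> #|A| = 1 -> lr X (a |: A).
    move=> X XG nAX /eqP/cards1P[y Ay]; have [_ _ aX _] := Gf _ XG.
    rewrite /lr; apply/orP; right; apply/orP; right; apply/disjP => x xX.
    rewrite in_setU1 Ay inE => /orP[/eqP xa|/eqP xy]; first by rewrite -xa xX in aX.
    by move: nAX; rewrite Ay sub1set -xy xX.
  have l22 : forall S R, S \in G -> A \subset S -> R \in G -> A \subset R -> lr (a |: S) (a |: R).
    move=> S R SG AS RG AR.
    case/or3P: (fl _ _ SG RG) => [SR|RS|dSR].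
    * by rewrite /lr setUS.
    * by rewrite /lr (setUS _ RS) orbT.
    * exfalso; move: A0; rewrite card_gt0 => /set0Pn[y yA].
      by move/disjP: dSR => /(_ y); apply; [apply: (subsetP AS)|apply: (subsetP AR)].
  have lrr : forall X : {set T}, lr X X by move=> X; rewrite /lr subxx.
  have l23 : forall S : {set T}, A \subset S -> lr (a |: S) A.
    by move=> S AS; rewrite /lr (subset_trans AS (subsetU1 _ _)) orbT.
  have l24 : forall S : {set T}, A \subset S -> lr (a |: S) (a |: A).
    by move=> S AS; rewrite /lr (setUS _ AS) orbT.
  move=> X Z /buildP[[XG nAX]|[S [SG AS] ->]|[cc ->]|[nc A1 ->]]
             /buildP[[ZG nAZ]|[R [RG AR] ->]|[cc' ->]|[nc' A1' ->]];
    try (by apply: fl); try (by apply: l12); try (by rewrite lrC; apply: l12);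
    try (by apply: l13); try (by rewrite lrC; apply: l13);
    try (by apply: l14); try (by rewrite lrC; apply: l14);
    try (by apply: l22); try (by apply: l23); try (by rewrite lrC; apply: l23);
    try (by apply: l24); try (by rewrite lrC; apply: l24); try (by apply: lrr).
  all: by [rewrite cc in nc'| rewrite cc' in nc].
Qed.

Definition phi (T : finType) (U : {set T}) (a : T) (F : {set {set T}}) :=
  [set S :\ a | S in [set S in F | vert (U :\ a) (S :\ a)]].
Definition Ii (T : finType) (U : {set T}) (a : T) (F : {set {set T}}) :=
  U :&: \bigcap_(S in F | a \in S) S.
Definition Ai (T : finType) (U : {set T}) (a : T) (F : {set {set T}}) := Ii U a F :\ a.

Lemma setD1_notin (T : finType) (S : {set T}) (a : T) : a \notin S -> S :\ a = S.
Proof. by move=> aS; apply/setP => x; rewrite !inE; case: eqP => // ->; rewrite (negbTE aS). Qed.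

Lemma phi_build (T : finType) (U : {set T}) (a : T) (G : {set {set T}}) (A : {set T}) (c : bool) :
  a \in U -> 2 < #|U| -> face (U :\ a) G -> validA U a G A c -> phi U a (build a G A c) = G.
Proof.
move=> aU U3 fG vA.
have [AY aA A0] := validA_facts aU U3 fG vA.
have Gf := G_facts aU fG.
have [fv _] : _ /\ _ := elimTF (faceP _ _) fG.
apply/setP => X; apply/imsetP/idP.
- move=> [S]; rewrite inE => /andP[/buildP SB vS] ->; move: vS.
  case: SB => [[SG _]|[R [RG _] ->]|[cc ->]|[_ A1 ->]].
  + by have [_ _ aS _] := Gf _ SG; rewrite (setD1_notin aS) => _.
  + by have [_ _ aR _] := Gf _ RG; rewrite (setU1K aR) => _.
  + rewrite (setD1_notin aA) => vAA; case/or3P: vA => [//|/eqP AE|/and3P[_ _]]; last by rewrite cc.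
    by move: vAA; rewrite /vert AE subxx cardY //=; lia.
  + by rewrite (setU1K aA) /vert A1 => /and3P[].
- move=> XG; have [_ _ aX _] := Gf _ XG.
  case AX: (A \subset X).
  + exists (a |: X); last by rewrite setU1K.
    rewrite inE (setU1K aX) fv // andbT; apply/buildP; constructor 2; by exists X.
  + exists X; last by rewrite (setD1_notin aX).
    rewrite inE (setD1_notin aX) fv // andbT; apply/buildP; constructor 1; by rewrite AX.
Qed.

Lemma Ai_build (T : finType) (U : {set T}) (a : T) (G : {set {set T}}) (A : {set T}) (c : bool) :
  a \in U -> 2 < #|U| -> face (U :\ a) G -> validA U a G A c -> Ai U a (build a G A c) = A.
Proof.
move=> aU U3 fG vA.
have [AY aA A0] := validA_facts aU U3 fG vA.
have [AU _] := subsetD1P AY.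
have Gf := G_facts aU fG.
rewrite /Ai; suff -> : Ii U a (build a G A c) = a |: A by rewrite setU1K.
have inB : forall S, S \in build a G A c -> a \in S -> Ii U a (build a G A c) \subset S.
  move=> S SB aS; apply: subset_trans (subsetIr _ _) _; apply: bigcap_inf; by rewrite SB.
apply/eqP; rewrite eqEsubset; apply/andP; split.
- case/or3P: vA => [AG|/eqP AE|/and3P[A1 _ nc]].
  + apply: inB; last by rewrite in_setU1 eqxx.
    by apply/buildP; constructor 2; exists A.
  + by rewrite AE setD1K //; apply: subsetIl.
  + apply: inB; last by rewrite in_setU1 eqxx.
    by apply/buildP; constructor 4; split => //; apply/eqP.
- rewrite subsetI subU1 //=; apply/bigcapsP => S /andP[/buildP SB aS].
  case: SB => [[SG _]|[R [RG AR] ->]|[cc SA]|[_ A1 ->]].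
  + by have [_ _ aS' _] := Gf _ SG; rewrite aS in aS'.
  + by apply: setUS.
  + by rewrite SA in aS; rewrite aS in aA.
  + by [].
Qed.

Lemma A_in_build (T : finType) (U : {set T}) (a : T) (G : {set {set T}}) (A : {set T}) (c : bool) :
  a \in U -> 2 < #|U| -> face (U :\ a) G -> validA U a G A c -> (A \in build a G A c) = c.
Proof.
move=> aU U3 fG vA.
have [AY aA A0] := validA_facts aU U3 fG vA.
have Gf := G_facts aU fG.
apply/idP/idP.
- case/buildP => [[_ /negP[]]|[S [SG _] AE]|[cc _]|[_ _ AE]] //.
  + have: a \in A by rewrite AE in_setU1 eqxx.
    by rewrite (negbTE aA).
  + have: a \in A by rewrite AE in_setU1 eqxx.
    by rewrite (negbTE aA).
- by move=> cc; apply/buildP; constructor 3.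
Qed.

Lemma cardsU_disj (T : finType) (A B : {set T}) : [disjoint A & B] -> #|A :|: B| = #|A| + #|B|.
Proof. by rewrite -setI_eq0 => /eqP H; have := cardsUI A B; rewrite H cards0 addn0. Qed.

Lemma card_build (T : finType) (U : {set T}) (a : T) (G : {set {set T}}) (A : {set T}) (c : bool) :
  a \in U -> 2 < #|U| -> face (U :\ a) G -> validA U a G A c ->
  #|build a G A c| = #|G| + (c || (#|A| == 1)).
Proof.
move=> aU U3 fG vA.
have [AY aA A0] := validA_facts aU U3 fG vA.
have Gf := G_facts aU fG.
clear vA; rewrite /build.
set P1 := [set S : {set T} in G | ~~ (A \subset S)].
set G2 := [set S : {set T} in G | A \subset S].
have c2 : #|[set a |: S | S in G2]| = #|G2|.
  apply: card_in_imset => S R; rewrite !inE => /andP[SG _] /andP[RG _] E.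
  have [_ _ aS _] := Gf _ SG; have [_ _ aR _] := Gf _ RG.
  by rewrite -(setU1K aS) -(setU1K aR) E.
have c12 : #|P1| + #|G2| = #|G|.
  have -> : P1 = G :\: [set S : {set T} | A \subset S] by apply/setP => S; rewrite !inE andbC.
  have -> : G2 = G :&: [set S : {set T} | A \subset S] by apply/setP => S; rewrite !inE.
  by rewrite addnC cardsID.
have d12 : [disjoint P1 & [set a |: S | S in G2]].
  apply/disjP => x; rewrite inE => /andP[xG _] /imsetP[S _ xE]; subst x.
  by have [_ _ aS _] := Gf _ xG; rewrite in_setU1 eqxx in aS.
have dE : [disjoint P1 :|: [set a |: S | S in G2] &
   (if c then [set A] else if #|A| == 1 then [set a |: A] else set0)].
  apply/disjP => x; rewrite inE => /orP[|/imsetP[S]].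
  - rewrite inE => /andP[xG nAx]; have [_ _ ax _] := Gf _ xG.
    case: c; first by rewrite inE => /eqP xA; rewrite xA subxx in nAx.
    case: eqP; last by rewrite inE.
    by move=> _; rewrite inE => /eqP xA; rewrite xA in_setU1 eqxx in ax.
  - rewrite inE => /andP[SG AS] xE; subst x; have [_ _ aS /andP[S2 _]] := Gf _ SG.
    case: c.
      rewrite inE => /eqP E; have: a \in A by rewrite -E in_setU1 eqxx.
      by rewrite (negbTE aA).
    case: eqP => A1; last by rewrite inE.
    rewrite inE => /eqP E.
    have : S = A by rewrite -(setU1K aS) -(setU1K aA) E.
    by move=> SA; rewrite SA A1 in S2.
rewrite cardsU_disj // cardsU_disj // c2 c12; congr (_ + _).
clear dE; case: c; first by rewrite cards1.
by case: eqP => _; rewrite ?cards1 ?cards0.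
Qed.


Lemma Ii_facts (T : finType) (U : {set T}) (a : T) (F : {set {set T}}) :
  a \in U -> 2 < #|U| -> face U F ->
  [/\ (forall S, S \in F -> a \in S -> Ii U a F \subset S),
      a \in Ii U a F,
      Ii U a F = U \/ Ii U a F \in F &
      (Ii U a F = U -> forall S, S \in F -> a \notin S)].
Proof.
move=> aU U3 fF; have [fv fl] : _ /\ _ := elimTF (faceP _ _) fF.
have I1 : forall S, S \in F -> a \in S -> Ii U a F \subset S.
  move=> S SF aS; apply: subset_trans (subsetIr _ _) _; apply: bigcap_inf; by rewrite SF.
have I2 : a \in Ii U a F.
  by rewrite inE aU; apply/bigcapP => S /andP[].
have I4 : Ii U a F = U -> forall S, S \in F -> a \notin S.
  move=> IU S SF; apply/negP => aS; have := I1 S SF aS; rewrite IU => US.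
  have := subset_leq_card US; have /and3P[_ _ S3] := fv _ SF; lia.
split => //.
case: (boolP [exists S in F, a \in S]) => [/exists_inP[S0 S0F aS0]|/exists_inP none].
- right.
  have P0 : (fun S : {set T} => (S \in F) && (a \in S)) S0 by rewrite /= S0F aS0.
  case: (@arg_minnP _ S0 (fun S : {set T} => (S \in F) && (a \in S)) (fun S : {set T} => #|S|) P0) => P /andP[PF aP] Pmin.
  suff -> : Ii U a F = P by [].
  apply/eqP; rewrite eqEsubset I1 //=; rewrite subsetI.
  have /and3P[PU _ _] := fv _ PF; rewrite PU /=.
  apply/bigcapsP => S /andP[SF aS].
  case/or3P: (fl _ _ PF SF) => [//|SP|dPS].
  + have := Pmin S; rewrite SF aS => /(_ isT) PS.
    have /eqP -> // : S == P by rewrite eqEcard SP.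
  + by move/disjP: dPS => /(_ a aP aS).
- left; apply/eqP; rewrite eqEsubset subsetIl subsetI subxx /=.
  by apply/bigcapsP => S /andP[SF aS]; case: none; exists S.
Qed.

Lemma phiP (T : finType) (U : {set T}) (a : T) (F : {set {set T}}) X :
  reflect (exists2 S, S \in F /\ vert (U :\ a) (S :\ a) & X = S :\ a) (X \in phi U a F).
Proof.
apply: (iffP imsetP) => [[S]|[S]].
- by rewrite inE => /andP[SF vS] ->; exists S.
- by move=> [SF vS] ->; exists S; rewrite // inE SF.
Qed.

Lemma phi_face (T : finType) (U : {set T}) (a : T) (F : {set {set T}}) :
  face U F -> face (U :\ a) (phi U a F).
Proof.
move=> fF; have [fv fl] : _ /\ _ := elimTF (faceP _ _) fF.
apply/faceP; split.
- by move=> X /phiP[S [_ vS] ->].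
- move=> X Z /phiP[S [SF _] ->] /phiP[R [RF _] ->].
  case/or3P: (fl _ _ SF RF) => [SR|RS|dSR].
  + by rewrite /lr setSD.
  + by rewrite /lr (setSD _ RS) orbT.
  + rewrite /lr; apply/orP; right; apply/orP; right; apply/disjP => x.
    rewrite !inE => /andP[_ xS] /andP[_ xR]; by move/disjP: dSR => /(_ x xS xR).
Qed.

Lemma face_decomp (T : finType) (U : {set T}) (a : T) (F : {set {set T}}) :
  a \in U -> 2 < #|U| -> face U F ->
  validA U a (phi U a F) (Ai U a F) (Ai U a F \in F) /\
  F = build a (phi U a F) (Ai U a F) (Ai U a F \in F).
Proof.
move=> aU U3 fF; have [fv fl] : _ /\ _ := elimTF (faceP _ _) fF.
have [I1 I2 I3 I4] := Ii_facts aU U3 fF.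
rewrite /Ai; move: I1 I2 I3 I4; set I := Ii U a F; set A := I :\ a; move=> I1 I2 I3 I4.
have cY := cardY aU.
have vF : forall S : {set T}, S \in F -> [/\ S \subset U, 2 <= #|S| & #|S| <= #|U| - 1].
  by move=> S /fv /and3P[].
have AY : A \subset U :\ a by apply: setSD; apply: subsetIl.
have aA : a \notin A by rewrite !inE eqxx.
have cA : #|I| = #|A| + 1 by rewrite (cardsD1 a I) I2 addnC.
have A0 : 0 < #|A|.
  case: I3 => [IU|IF]; last by have [_ I2' _] := vF _ IF; lia.
  by move: cA; rewrite IU; lia.
have AnF : #|A| = 1 -> A \notin F.
  by move=> A1; apply/negP => /vF[_]; rewrite A1.
have K2 : forall S : {set T}, S \in F -> a \in S -> A \subset S :\ a by move=> S SF aS; apply: setSD; apply: I1.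
have K1 : forall S : {set T}, S \in F -> a \notin S -> S \subset A \/ [disjoint S & A].
  move=> S SF aS; case: I3 => [IU|IF].
  - by left; rewrite /A IU subsetD1; have [SU _ _] := vF _ SF; rewrite SU.
  - case/or3P: (fl _ _ SF IF) => [SI|IS|dSI].
    + by left; rewrite subsetD1 SI.
    + by have := subsetP IS a I2; rewrite (negbTE aS).
    + right; apply/disjP => x xS; rewrite inE => /andP[_ xI].
      by move/disjP: dSI => /(_ x xS xI).
have nemp : forall S : {set T}, A \subset S -> [disjoint S & A] -> False.
  move=> S AS dSA; move: A0; rewrite card_gt0 => /set0Pn[y yA].
  by move/disjP: dSA => /(_ y (subsetP AS y yA) yA).
have IUY : I = U -> A = U :\ a by move=> IU; rewrite /A IU.
have IaA : I \in F -> a |: A = I by move=> _; rewrite /A setD1K.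
split.
-
  case: I3 => [IU|IF]; first by rewrite /validA IUY // eqxx orbT.
  case: (eqVneq #|A| 1) => [A1|A1].
  + by rewrite /validA A1 eqxx AY (AnF A1) !orbT.
  + apply/orP; left; apply/phiP; exists I => //; split => //.
    have [_ I2' I3'] := vF _ IF.
    by rewrite /vert -/A AY cY; clear -cA I2' I3' A1 A0; lia.
- apply/setP => X; apply/idP/buildP.
  + move=> XF; have [XU X2 X3] := vF _ XF.
    case: (boolP (a \in X)) => aX.
    * have AX := K2 _ XF aX.
      have cX : #|X| = #|X :\ a| + 1 by rewrite (cardsD1 a X) aX addnC.
      case: (boolP (vert (U :\ a) (X :\ a))) => vX.
      - constructor 2; exists (X :\ a); last by rewrite setD1K.
        by split => //; apply/phiP; exists X.
      - have X1 : #|X :\ a| = 1.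
          move: vX; rewrite /vert setSD //= cY; clear -cX X2 X3; lia.
        have IF : I \in F by case: I3 => // IU; have := I4 IU X XF; rewrite aX.
        have IX : I = X.
          apply/eqP; rewrite eqEcard I1 //=; have [_ I2' _] := vF _ IF; clear -I2' cX X1; lia.
        have AE : A = X :\ a by rewrite /A IX.
        constructor 4; split.
        - by apply: AnF; rewrite AE.
        - by rewrite AE.
        - by rewrite AE setD1K.
    * case: (eqVneq X A) => [XA|XA].
      - by constructor 3; rewrite -XA XF.
      - have XY : X \subset U :\ a by rewrite subsetD1 XU aX.
        have nAX : ~~ (A \subset X).
          apply/negP => AX; case: (K1 _ XF aX) => [XsA|dXA].
          + by move/eqP: XA; apply; apply/eqP; rewrite eqEsubset XsA AX.
          + exact: (nemp _ AX dXA).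
        constructor 1; split => //; apply/phiP; exists X; last by rewrite setD1_notin.
        split => //; rewrite (setD1_notin aX) /vert XY X2 /= cY.
        case: (leqP #|X| (#|U| - 1 - 1)) => // big.
        have XYe : X = U :\ a by apply/eqP; rewrite eqEcard XY cY; clear -big X3; lia.
        case: (K1 _ XF aX) => [XsA|dXA].
        - by move/eqP: XA; case; apply/eqP; rewrite eqEsubset XsA XYe AY.
        - by exfalso; apply: (nemp X) dXA; rewrite XYe.
  + case=> [[/phiP[S [SF vS] ->] nAX]|[S [/phiP[R [RF vR] ->] AS] ->]|[AF ->]|[_ A1 ->]].
    * case: (boolP (a \in S)) => aS; first by rewrite K2 in nAX.
      by rewrite setD1_notin.
    * case: (boolP (a \in R)) => aR; first by rewrite setD1K.
      rewrite (setD1_notin aR) in AS vR *.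
      have RA : R = A.
        case: (K1 _ RF aR) => [RsA|dRA]; last by case: (nemp _ AS dRA).
        by apply/eqP; rewrite eqEsubset RsA AS.
      case: I3 => [IU|IF].
      - by move: vR; rewrite RA IUY // /vert subxx /=; clear; lia.
      - by rewrite RA IaA.
    * by [].
    * case: I3 => [IU|IF]; last by rewrite IaA.
      by move: A1; rewrite IUY // cY; clear -U3; lia.
Qed.


Definition cnt (T : finType) (U : {set T}) (j : nat) :=
  #|[set F : {set {set T}} | face U F && (#|F| == j)]|.

Definition Trip (T : finType) (U : {set T}) (a : T) (j : nat) :=
  [set t : {set {set T}} * {set T} * bool |
    [&& face (U :\ a) t.1.1, validA U a t.1.1 t.1.2 t.2 &
        #|t.1.1| + (t.2 || (#|t.1.2| == 1)) == j]].

Lemma cnt_Trip (T : finType) (U : {set T}) (a : T) (j : nat) :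
  a \in U -> 2 < #|U| -> cnt U j = #|Trip U a j|.
Proof.
move=> aU U3; rewrite /cnt.
pose bd (t : {set {set T}} * {set T} * bool) := build a t.1.1 t.1.2 t.2.
have -> : [set F : {set {set T}} | face U F && (#|F| == j)] = [set bd t | t in Trip U a j].
  apply/setP => F; rewrite inE; apply/andP/imsetP.
  - move=> [fF /eqP cF]; have [vA FE] := face_decomp aU U3 fF.
    exists (phi U a F, Ai U a F, Ai U a F \in F); last exact: FE.
    have fP := phi_face a fF.
    rewrite inE /= fP vA /= -cF; have := card_build aU U3 fP vA; rewrite -FE => ->; exact: eqxx.
  - move=> [[[G A] c]]; rewrite inE /= => /and3P[fG vA /eqP cj] ->.
    by split; [apply: build_face | rewrite /bd /= (card_build aU U3 fG vA) cj].
apply: card_in_imset => [[[G A] c]] [[G' A'] c']; rewrite !inE /= =>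
  /and3P[fG vA _] /and3P[fG' vA' _]; rewrite /bd /= => E.
have e1 : G = G' by rewrite -(phi_build aU U3 fG vA) E (phi_build aU U3 fG' vA').
have e2 : A = A' by rewrite -(Ai_build aU U3 fG vA) E (Ai_build aU U3 fG' vA').
have e3 : c = c'.
  by rewrite -(A_in_build aU U3 fG vA) E e2 (A_in_build aU U3 fG' vA').
by rewrite e1 e2 e3.
Qed.

Lemma card_sum (I : finType) (P : pred I) : #|[set i | P i]| = \sum_i (P i : nat).
Proof.
rewrite -sum1_card big_mkcond /=; apply: eq_bigr => i _; rewrite inE; by case: (P i).
Qed.

Lemma card_sgl (T : finType) (Y : {set T}) :
  #|[set A : {set T} | (#|A| == 1) && (A \subset Y)]| = #|Y|.
Proof.
have -> : [set A : {set T} | (#|A| == 1) && (A \subset Y)] = [set [set y] | y in Y].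
  apply/setP => A; rewrite inE; apply/andP/imsetP.
  - by move=> [/cards1P[y ->]]; rewrite sub1set => yY; exists y.
  - by move=> [y yY ->]; rewrite cards1 sub1set.
by apply: card_imset; apply: set1_inj.
Qed.

Lemma per_A (T : finType) (U : {set T}) (a : T) (G : {set {set T}}) (A : {set T}) (k : nat) :
  a \in U -> 2 < #|U| -> face (U :\ a) G ->
  (validA U a G A true && (#|G| + (true || (#|A| == 1)) == k.+1) : nat) +
  (validA U a G A false && (#|G| + (false || (#|A| == 1)) == k.+1) : nat) =
  ((A \in G) || (A == U :\ a)) * ((#|G| == k.+1) + (#|G| == k)) +
  ((#|A| == 1) && (A \subset U :\ a)) * (#|G| == k).
Proof.
move=> aU U3 fG.
have Gf := G_facts aU fG.
have big : (A \in G) || (A == U :\ a) -> #|A| != 1.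
  case/orP => [/Gf[_ _ _ /andP[A2 _]]|/eqP->]; first by apply/eqP => A1; rewrite A1 in A2.
  by rewrite cardY //; apply/eqP; clear -U3; lia.
rewrite /validA /=.
case: (boolP ((A \in G) || (A == U :\ a))) => [gy|ngy].
- have := big gy; move/negbTE => ->.
  move: gy; rewrite orbA => -> /=; rewrite addn1 eqSS addn0.
  by case: (#|G| == k) ; case: (#|G| == k.+1).
- move: ngy; rewrite negb_or => /andP[/negbTE -> /negbTE ->] /=.
  rewrite !mul0n !add0n.
  case: (#|A| == 1); case: (A \subset U :\ a) => //=.
  by rewrite addn1 eqSS; case: (#|G| == k).
Qed.

Lemma per_G (T : finType) (U : {set T}) (a : T) (G : {set {set T}}) (k : nat) :
  a \in U -> 2 < #|U| ->
  \sum_(A : {set T}) \sum_(c : bool)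
     ([&& face (U :\ a) G, validA U a G A c & #|G| + (c || (#|A| == 1)) == k.+1] : nat) =
  (face (U :\ a) G && (#|G| == k.+1)) * k.+2 +
  (face (U :\ a) G && (#|G| == k)) * (k.+1 + #|U :\ a|).
Proof.
move=> aU U3.
case: (boolP (face (U :\ a) G)) => fG /=; last first.
  by rewrite big1 // => A _; rewrite big1.
have -> : \sum_(A : {set T}) \sum_(c : bool)
     ([&& true, validA U a G A c & #|G| + (c || (#|A| == 1)) == k.+1] : nat) =
  \sum_(A : {set T}) (((A \in G) || (A == U :\ a)) * ((#|G| == k.+1) + (#|G| == k)) +
  ((#|A| == 1) && (A \subset U :\ a)) * (#|G| == k)).
  by apply: eq_bigr => A _; rewrite big_bool /= per_A.
rewrite big_split /= -!big_distrl /= -!card_sum card_sgl.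
have -> : [set A : {set T} | (A \in G) || (A == U :\ a)] = U :\ a |: G.
  by apply/setP => A; rewrite !inE orbC.
rewrite cardsU1.
have -> : (U :\ a \notin G).
  apply/negP => /(G_facts aU fG)[_ _ _ /andP[_]]; rewrite cardY //; clear -U3; lia.
case: (eqVneq #|G| k.+1) => [->|n1]; case: (eqVneq #|G| k) => [e|n2] //=; try lia.
by rewrite e; lia.
Qed.

Lemma Trip_card (T : finType) (U : {set T}) (a : T) (k : nat) :
  a \in U -> 2 < #|U| ->
  #|Trip U a k.+1| = k.+2 * cnt (U :\ a) k.+1 + (k.+1 + #|U :\ a|) * cnt (U :\ a) k.
Proof.
move=> aU U3; rewrite /Trip card_sum.
pose f (t : {set {set T}} * {set T} * bool) :=
  ([&& face (U :\ a) t.1.1, validA U a t.1.1 t.1.2 t.2 &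
        #|t.1.1| + (t.2 || (#|t.1.2| == 1)) == k.+1] : nat).
transitivity (\sum_t f t); first by [].
transitivity (\sum_(GA : {set {set T}} * {set T}) \sum_(c : bool) f (GA, c)).
  by rewrite pair_big; apply: eq_big => // -[[G A] c].
transitivity (\sum_(G : {set {set T}}) \sum_(A : {set T}) \sum_(c : bool) f (G, A, c)).
  by rewrite [RHS]pair_big; apply: eq_big => // -[G A].
rewrite /f /=.
under eq_bigr => G _ do rewrite per_G //.
rewrite big_split /= -!big_distrl /= /cnt !card_sum.
by rewrite mulnC [X in _ + X]mulnC.
Qed.



Lemma inj_mem (T1 T2 : finType) (f : T1 -> T2) (x : T1) (A : {set T1}) :
  injective f -> (f x \in f @: A) = (x \in A).
Proof.
move=> finj; apply/imsetP/idP => [[y yA /finj ->]//|xA]; by exists x.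
Qed.

Lemma inj_vert (T1 T2 : finType) (f : T1 -> T2) (U S : {set T1}) :
  injective f -> vert (f @: U) (f @: S) = vert U S.
Proof.
move=> finj; rewrite /vert !card_imset //.
congr (_ && _); apply/idP/idP; last exact: imsetS.
by move/subsetP=> H; apply/subsetP => x xS; rewrite -(inj_mem _ _ finj) H // inj_mem.
Qed.

Lemma inj_lr (T1 T2 : finType) (f : T1 -> T2) (S R : {set T1}) :
  injective f -> lr (f @: S) (f @: R) = lr S R.
Proof.
move=> finj.
have sub : forall X Z : {set T1}, (f @: X \subset f @: Z) = (X \subset Z).
  move=> X Z; apply/idP/idP; last exact: imsetS.
  by move/subsetP=> H; apply/subsetP => x xS; rewrite -(inj_mem _ _ finj) H // inj_mem.
rewrite /lr !sub; congr [|| _, _ | _].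
apply/disjP/disjP => H x.
- by move=> xS xR; apply: (H (f x)); rewrite inj_mem.
- by move=> /imsetP[y yS ->]; rewrite inj_mem //; apply: H.
Qed.

Lemma inj_face (T1 T2 : finType) (f : T1 -> T2) (U : {set T1}) (F : {set {set T1}}) :
  injective f -> face (f @: U) [set f @: S | S : {set T1} in F] = face U F.
Proof.
move=> finj; apply/faceP/faceP => [[H1 H2]|[H1 H2]]; split.
- by move=> S SF; rewrite -(inj_vert _ _ finj); apply: H1; apply: imset_f.
- by move=> S R SF RF; rewrite -(inj_lr _ _ finj); apply: H2; apply: imset_f.
- by move=> S' /imsetP[S SF ->]; rewrite inj_vert //; apply: H1.
- by move=> S' R' /imsetP[S SF ->] /imsetP[R RF ->]; rewrite inj_lr //; apply: H2.
Qed.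

Lemma transfer (T1 T2 : finType) (f : T1 -> T2) (U : {set T1}) (P : pred nat) :
  injective f ->
  #|[set F | face (f @: U) F && P #|F|]| = #|[set F | face U F && P #|F|]|.
Proof.
move=> finj.
have ginj : injective (fun S : {set T1} => f @: S) by apply: imset_inj.
have minj : injective (fun F : {set {set T1}} => [set f @: S | S : {set T1} in F]) by apply: imset_inj.
rewrite -(card_imset _ minj); apply: eq_card => F'; rewrite inE.
apply/andP/imsetP.
- move=> [fF' PF'].
  have [fv _] : _ /\ _ := elimTF (faceP _ _) fF'.
  have pre : forall S', S' \in F' -> f @: (f @^-1: S') = S'.
    move=> S' /fv /and3P[SU _ _]; apply/setP => y; apply/imsetP/idP.
    + by move=> [x]; rewrite inE => xS ->.
    + move=> yS; move: (subsetP SU y yS) => /imsetP[x _ yE]; subst y.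
      by exists x; rewrite // inE.
  have E : F' = [set f @: S | S : {set T1} in [set f @^-1: S' | S' : {set T2} in F']].
    rewrite -imset_comp -[LHS]imset_id; apply: eq_in_imset => S' S'F /=.
    by rewrite pre.
  exists [set f @^-1: S' | S' : {set T2} in F']; last exact: E.
  have cE : #|[set f @^-1: S' | S' : {set T2} in F']| = #|F'| by rewrite [in RHS]E (card_imset _ ginj).
  by rewrite inE -(inj_face _ _ finj) -E fF' /= cE.
- move=> [F]; rewrite inE => /andP[fF PF] ->.
  by rewrite inj_face // fF card_imset.
Qed.

Import Order.TTheory GRing.Theory Num.Theory.

Definition Un (n : nat) := [set x : 'I_n.+1 | 2 <= x].

Lemma cardUn n : #|Un n| = n - 1.
Proof.
rewrite /Un (@card_sum _ (fun x : 'I_n.+1 => 2 <= x)) -(big_mkord xpredT (fun i => (2 <= i : nat))).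
elim: n => [|n IH]; first by rewrite big_nat1.
rewrite big_nat_recr //= IH; case: n {IH} => //.
by move=> n /=; lia.
Qed.

Lemma wh_vertex_eq n (S : {set 'I_n.+1}) : wh_vertex S = vert (Un n) S.
Proof.
rewrite /wh_vertex /vert cardUn; congr [&& _, _ & _].
- by apply/forall_inP/subsetP => H x xS; [rewrite inE; apply: H | move: (H x xS); rewrite inE].
- by congr (_ <= _); lia.
Qed.

Lemma wh_face_eq n (F : {set {set 'I_n.+1}}) : wh_face F = face (Un n) F.
Proof.
rewrite /wh_face /face /lr; congr (_ && _); apply: eq_forallb => S.
by rewrite wh_vertex_eq.
Qed.

Lemma whf_eq n i : whf n i =
  #|[set F : {set {set 'I_n.+1}} | face (Un n) F && (#|F|%:Z == i + 1)%R]|.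
Proof. by rewrite /whf; apply: eq_card => F; rewrite !inE wh_face_eq. Qed.

Lemma whf_pos n k : whf n (Posz k) = cnt (Un n) k.+1.
Proof.
rewrite whf_eq /cnt; apply: eq_card => F; rewrite !inE; congr (_ && _).
have -> : (Posz k + 1)%R = Posz k.+1 by rewrite -addn1 PoszD.
by rewrite eqz_nat.
Qed.

Lemma whf_m1 n : whf n (-1) = 1.
Proof.
rewrite whf_eq.
have -> : [set F : {set {set 'I_n.+1}} | face (Un n) F && (#|F|%:Z == -1 + 1)%R] = [set set0].
  apply/setP => F; rewrite !inE addNr.
  apply/andP/eqP => [[_ /eqP]|->].
  - by move=> H; apply/eqP; rewrite -cards_eq0; apply/eqP; lia.
  - by rewrite cards0 eqxx; split => //; apply/faceP; split => S; rewrite inE.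
by rewrite cards1.
Qed.

Lemma whf_m2 n : whf n (-2) = 0.
Proof.
rewrite whf_eq; apply: eq_card0 => F; rewrite !inE.
by apply/negP => /andP[_ /eqP]; lia.
Qed.

Lemma cnt_rec (T : finType) (U : {set T}) (a : T) (k : nat) :
  a \in U -> 2 < #|U| ->
  cnt U k.+1 = k.+2 * cnt (U :\ a) k.+1 + (k.+1 + #|U :\ a|) * cnt (U :\ a) k.
Proof. by move=> aU U3; rewrite (cnt_Trip _ aU U3) Trip_card. Qed.

Lemma whf_posm1 n k : whf n (Posz k - 1)%R = cnt (Un n) k.
Proof.
rewrite whf_eq /cnt; apply: eq_card => F; rewrite !inE subrK eqz_nat //.
Qed.

Lemma Y_eq m : (Un m.+1) :\ ord_max = widen_ord (leqnSn m.+1) @: Un m.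
Proof.
apply/setP => x; rewrite !inE; apply/andP/imsetP.
- move=> [xne x2].
  have xl : (x < m.+1)%N.
    have := ltn_ord x; rewrite ltnS leq_eqVlt => /orP[/eqP xe|] //.
    have xm : x = ord_max by apply: val_inj; rewrite /= xe.
    by rewrite xm eqxx in xne.
  by exists (Ordinal xl); [rewrite inE | apply: val_inj].
- move=> [y]; rewrite inE => y2 ->; split => //.
  apply/eqP => /(congr1 val) /= ye; have := ltn_ord y; rewrite ye ltnn //.
Qed.

Lemma cnt_transfer (T1 T2 : finType) (f : T1 -> T2) (U : {set T1}) j :
  injective f -> cnt (f @: U) j = cnt U j.
Proof. by move=> finj; rewrite /cnt (transfer _ (fun x => x == j) finj). Qed.

Lemma widen_inj m : injective (widen_ord (leqnSn m.+1)).
Proof. by move=> x y /(congr1 val) /= /val_inj. Qed.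

Local Open Scope ring_scope.

Theorem mainTheorem5 :
  (forall n : nat, (3 <= n)%N -> whf n (-1) = 1%N) /\
  (forall (n : nat) (i : int), (4 <= n)%N -> -1 <= i -> i <= n%:Z - 4 ->
     (whf n i)%:Z =
       (i + 2) * (whf n.-1 i)%:Z + (n%:Z + i - 1) * (whf n.-1 (i - 1))%:Z).
Proof.
split; first by move=> n _; apply: whf_m1.
move=> n i n4 i1 _.
case: n n4 => [|m] // n4 /=.
case: i i1 => [k|k] i1.
- rewrite whf_pos whf_pos whf_posm1.
  have aU : (ord_max : 'I_m.+2) \in Un m.+1 by rewrite inE /=; lia.
  have U3 : (2 < #|Un m.+1|)%N by rewrite cardUn; lia.
  rewrite (cnt_rec _ aU U3) Y_eq !cnt_transfer ?card_imset; try exact: widen_inj.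
  rewrite cardUn.
  lia.
- have k0 : k = 0%N by move: i1; case: k.
  subst k.
  have -> : Negz 0 = -1 by [].
  have -> : (-1 : int) - 1 = -2 by [].
  rewrite whf_m1 whf_m1 whf_m2; lia.
Qed.
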